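(* Let $P$ be the transition matrix of a reversible and ergodic Markov chain on $V$ with stationary distribution $\pi$ and mixing rate $t^*$. For the SRT router model for $P$, with any initial configuration, $$\left|\chi^{(T)}_w-\mu^{(T)}_w\right|\le\frac{6\pi_w}{\pi_{\min}}\,t^*\,\Delta$$ for all $w\in V$ and all $T\ge0$.
   Context: Let $V=\{1,\dots,N\}$ and let $P\in\mathbb{R}_{\ge 0}^{N\times N}$ be an ergodic (irreducible, aperiodic) stochastic matrix (entries may be irrational) with stationary distribution $\pi$; $\pi_{\min}=\min_v\pi_v$; reversible means $\pi_uP_{u,v}=\pi_vP_{v,u}$ for all $u,v$. For $v\in V$ let $\mathcal N(v)=\{u: P_{v,u}>0\}$, $\delta(v)=|\mathcal N(v)|$, $\Delta=\max_v\delta(v)$. Total variation distance $d_{TV}(\xi,\zeta)=\frac12\|\xi-\zeta\|_1$; mixing time $\tau(\varepsilon)=\max_{v}\min\{t\ge0: d_{TV}(P^t_{v,\cdot},\pi)\le\varepsilon\}$; mixing rate $t^*=\tau(1/4)$. A functional-router model consists of functions $\sigma_v:\mathbb{Z}_{\ge0}\to\mathcal N(v)$; write $I_{v,u}[z,z')=|\{j\in\{z,\dots,z'-1\}:\sigma_v(j)=u\}|$ (zero if $z'\le z$). Given $\chi^{(0)}\in\mathbb{Z}_{\ge0}^N$, set $Z^{(t)}_{v,u}=I_{v,u}\big[\sum_{s=0}^{t-1}\chi^{(s)}_v,\sum_{s=0}^{t}\chi^{(s)}_v\big)$, $\chi^{(t+1)}_u=\sum_vZ^{(t)}_{v,u}$,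 $\mu^{(0)}=\chi^{(0)}$, $\mu^{(t)}=\mu^{(0)}P^t$. The SRT router is defined recursively: for $i\ge0$ let $T_i(v)=\{u\in\mathcal N(v): I_{v,u}[0,i)-(i+1)P_{v,u}<0\}$ and let $\sigma_v(i)$ be an element $u\in T_i(v)$ minimizing $(I_{v,u}[0,i)+1)/P_{v,u}$ (ties broken arbitrarily). *)

(* Defs.v *)
From Stdlib Require Import Reals Lra Lia Arith List.
Import ListNotations.
Open Scope R_scope.

(* V = {0,...,N-1} (0-based version of {1,...,N}). Matrices are functions nat -> nat -> R,
   only the entries with indices < N matter. *)

Definition Rsum (N : nat) (f : nat -> R) : R :=
  fold_right Rplus 0 (map f (seq 0 N)).

Definition nsum (N : nat) (f : nat -> nat) : nat :=
  fold_right Nat.add 0%nat (map f (seq 0 N)).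

Fixpoint Ppow (N : nat) (P : nat -> nat -> R) (t : nat) (u v : nat) : R :=
  match t with
  | O => if Nat.eqb u v then 1 else 0
  | S t' => Rsum N (fun k => Ppow N P t' u k * P k v)
  end.

Definition stochastic (N : nat) (P : nat -> nat -> R) : Prop :=
  (forall u v, (u < N)%nat -> (v < N)%nat -> 0 <= P u v) /\
  (forall u, (u < N)%nat -> Rsum N (fun v => P u v) = 1).

Definition irreducible (N : nat) (P : nat -> nat -> R) : Prop :=
  forall u v, (u < N)%nat -> (v < N)%nat -> exists t, 0 < Ppow N P t u v.

Definition aperiodic (N : nat) (P : nat -> nat -> R) : Prop :=
  forall v, (v < N)%nat ->
    forall d : nat,
      (forall t, (1 <= t)%nat -> 0 < Ppow N P t v v -> Nat.divide d t) -> d = 1%nat.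

Definition ergodic (N : nat) (P : nat -> nat -> R) : Prop :=
  stochastic N P /\ irreducible N P /\ aperiodic N P.

Definition stationary (N : nat) (P : nat -> nat -> R) (pi : nat -> R) : Prop :=
  (forall v, (v < N)%nat -> 0 <= pi v) /\
  Rsum N pi = 1 /\
  (forall v, (v < N)%nat -> Rsum N (fun u => pi u * P u v) = pi v).

Definition reversible (N : nat) (P : nat -> nat -> R) (pi : nat -> R) : Prop :=
  forall u v, (u < N)%nat -> (v < N)%nat -> pi u * P u v = pi v * P v u.

(* pimin = min_v pi_v (the default pi 0 is itself in the list when N >= 1) *)
Definition pimin (N : nat) (pi : nat -> R) : R :=
  fold_right Rmin (pi 0%nat) (map pi (seq 0 N)).

Definition Rpos_b (x : R) : bool := if Rlt_dec 0 x then true else false.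

Definition delta (N : nat) (P : nat -> nat -> R) (v : nat) : nat :=
  length (filter (fun u => Rpos_b (P v u)) (seq 0 N)).

Definition max_degree (N : nat) (P : nat -> nat -> R) : nat :=
  fold_right Nat.max 0%nat (map (delta N P) (seq 0 N)).

Definition dTV_row (N : nat) (P : nat -> nat -> R) (pi : nat -> R) (v t : nat) : R :=
  / 2 * Rsum N (fun u => Rabs (Ppow N P t v u - pi u)).

(* tau(eps) = max_v min{ t >= 0 : d_TV(P^t_{v,.}, pi) <= eps }, unfolded:
   every v reaches distance <= eps by time tau, and some v has not reached it before tau. *)
Definition is_mixing_time (N : nat) (P : nat -> nat -> R) (pi : nat -> R)
    (eps : R) (tau : nat) : Prop :=
  (forall v, (v < N)%nat -> exists t, (t <= tau)%nat /\ dTV_row N P pi v t <= eps) /\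
  (exists v, (v < N)%nat /\ forall t, (t < tau)%nat -> eps < dTV_row N P pi v t).

Definition is_mixing_rate (N : nat) (P : nat -> nat -> R) (pi : nat -> R) (tstar : nat) : Prop :=
  is_mixing_time N P pi (/ 4) tstar.

Definition Icount (sigma : nat -> nat -> nat) (v u z z' : nat) : nat :=
  length (filter (fun j => Nat.eqb (sigma v j) u) (seq z (z' - z))).

(* state t = (chi^{(t)}, fun v => sum_{s<t} chi^{(s)}_v) *)
Fixpoint router_state (N : nat) (sigma : nat -> nat -> nat) (chi0 : nat -> nat) (t : nat)
  : (nat -> nat) * (nat -> nat) :=
  match t with
  | O => (chi0, fun _ => 0%nat)
  | S t' =>
      let (c, s) := router_state N sigma chi0 t' in
      ((fun u => nsum N (fun v => Icount sigma v u (s v) (s v + c v))),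
       (fun v => (s v + c v)%nat))
  end.

Definition chi_conf (N : nat) (sigma : nat -> nat -> nat) (chi0 : nat -> nat) (t : nat) : nat -> nat :=
  fst (router_state N sigma chi0 t).

Definition mu_dist (N : nat) (P : nat -> nat -> R) (chi0 : nat -> nat) (t w : nat) : R :=
  Rsum N (fun v => INR (chi0 v) * Ppow N P t v w).

Definition in_T (N : nat) (P : nat -> nat -> R) (sigma : nat -> nat -> nat) (v i u : nat) : Prop :=
  (u < N)%nat /\ 0 < P v u /\
  INR (Icount sigma v u 0 i) - INR (S i) * P v u < 0.

Definition is_SRT (N : nat) (P : nat -> nat -> R) (sigma : nat -> nat -> nat) : Prop :=
  forall v i, (v < N)%nat ->
    in_T N P sigma v i (sigma v i) /\
    forall u, in_T N P sigma v i u ->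
      (INR (Icount sigma v (sigma v i) 0 i) + 1) / P v (sigma v i)
        <= (INR (Icount sigma v u 0 i) + 1) / P v u.

(* Main.v *)
Require Import Defs.
From Stdlib Require Import Reals Lra Lia Arith List Psatz.
Import ListNotations.
Open Scope R_scope.

Lemma fold_Rplus_acc (l : list R) a : fold_right Rplus a l = fold_right Rplus 0 l + a.
Proof. induction l; simpl; [lra| rewrite IHl; lra]. Qed.

Lemma Rsum_0 f : Rsum 0 f = 0.
Proof. reflexivity. Qed.

Lemma Rsum_S n f : Rsum (S n) f = Rsum n f + f n.
Proof.
  unfold Rsum. rewrite seq_S, map_app, fold_right_app. simpl.
  rewrite fold_Rplus_acc. lra.
Qed.

Lemma nsum_S n f : nsum (S n) f = (nsum n f + f n)%nat.
Proof.
  unfold nsum. rewrite seq_S, map_app, fold_right_app. simpl.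
  generalize (map f (seq 0 n)). intro l. induction l; simpl; lia.
Qed.

Lemma INR_nsum n f : INR (nsum n f) = Rsum n (fun i => INR (f i)).
Proof.
  induction n. reflexivity. rewrite nsum_S, Rsum_S, plus_INR, IHn. reflexivity.
Qed.

Lemma Rsum_ext n f g : (forall i, (i < n)%nat -> f i = g i) -> Rsum n f = Rsum n g.
Proof.
  induction n; intros H. reflexivity. rewrite !Rsum_S, IHn by (intros; apply H; lia).
  rewrite H by lia. reflexivity.
Qed.

Lemma Rsum_plus n f g : Rsum n (fun i => f i + g i) = Rsum n f + Rsum n g.
Proof. induction n. simpl. unfold Rsum; simpl; lra. rewrite !Rsum_S, IHn. lra. Qed.

Lemma Rsum_minus n f g : Rsum n (fun i => f i - g i) = Rsum n f - Rsum n g.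
Proof. induction n. unfold Rsum; simpl; lra. rewrite !Rsum_S, IHn. lra. Qed.

Lemma Rsum_scal_l n c f : Rsum n (fun i => c * f i) = c * Rsum n f.
Proof. induction n. unfold Rsum; simpl; lra. rewrite !Rsum_S, IHn. lra. Qed.

Lemma Rsum_scal_r n c f : Rsum n (fun i => f i * c) = Rsum n f * c.
Proof. induction n. unfold Rsum; simpl; lra. rewrite !Rsum_S, IHn. lra. Qed.

Lemma Rsum_const0 n : Rsum n (fun _ => 0) = 0.
Proof. induction n. reflexivity. rewrite Rsum_S, IHn. lra. Qed.

Lemma Rsum_le n f g : (forall i, (i < n)%nat -> f i <= g i) -> Rsum n f <= Rsum n g.
Proof.
  induction n; intros H. unfold Rsum; simpl; lra. rewrite !Rsum_S.
  assert (Rsum n f <= Rsum n g) by (apply IHn; intros; apply H; lia).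
  assert (f n <= g n) by (apply H; lia). lra.
Qed.

Lemma Rsum_nonneg n f : (forall i, (i < n)%nat -> 0 <= f i) -> 0 <= Rsum n f.
Proof.
  intros H. rewrite <- (Rsum_const0 n). apply Rsum_le. auto.
Qed.

Lemma Rsum_abs_le n f : Rabs (Rsum n f) <= Rsum n (fun i => Rabs (f i)).
Proof.
  induction n. unfold Rsum; simpl. rewrite Rabs_R0; lra.
  rewrite !Rsum_S. eapply Rle_trans. apply Rabs_triang. lra.
Qed.

Lemma Rsum_swap n m f :
  Rsum n (fun i => Rsum m (fun j => f i j)) = Rsum m (fun j => Rsum n (fun i => f i j)).
Proof.
  induction n. rewrite Rsum_0. symmetry. apply Rsum_const0.
  rewrite Rsum_S, IHn, <- Rsum_plus. apply Rsum_ext. intros. rewrite Rsum_S. reflexivity.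
Qed.

Lemma Rsum_kron_l n k f : (k < n)%nat ->
  Rsum n (fun i => (if Nat.eqb k i then 1 else 0) * f i) = f k.
Proof.
  induction n; intros Hk. lia. rewrite Rsum_S.
  destruct (Nat.eq_dec k n).
  - subst. rewrite Nat.eqb_refl.
    rewrite (Rsum_ext _ _ (fun _ => 0)). rewrite Rsum_const0. lra.
    intros. replace (Nat.eqb n i) with false. lra. symmetry; apply Nat.eqb_neq; lia.
  - rewrite IHn by lia. replace (Nat.eqb k n) with false. lra. symmetry; apply Nat.eqb_neq; lia.
Qed.

Lemma Rsum_kron_r n k f : (k < n)%nat ->
  Rsum n (fun i => f i * (if Nat.eqb i k then 1 else 0)) = f k.
Proof.
  intros Hk. rewrite <- (Rsum_kron_l n k f Hk). apply Rsum_ext. intros.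
  rewrite Nat.eqb_sym. lra.
Qed.

Lemma Rsum_first n f : Rsum (S n) f = f 0%nat + Rsum n (fun i => f (S i)).
Proof.
  induction n. rewrite Rsum_S, !Rsum_0. lra.
  rewrite Rsum_S, IHn, Rsum_S. lra.
Qed.

Lemma Rsum_add_range a b f : Rsum (a + b) f = Rsum a f + Rsum b (fun i => f (a + i)%nat).
Proof.
  induction b. rewrite Nat.add_0_r, Rsum_0. lra.
  rewrite Nat.add_succ_r, !Rsum_S, IHb. lra.
Qed.

Lemma Rsum_mono_range n m f : (n <= m)%nat -> (forall i, (i < m)%nat -> 0 <= f i) ->
  Rsum n f <= Rsum m f.
Proof.
  intros Hnm H. replace m with (n + (m - n))%nat by lia. rewrite Rsum_add_range.
  assert (0 <= Rsum (m - n) (fun i => f (n + i)%nat)) by (apply Rsum_nonneg; intros; apply H; lia).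
  lra.
Qed.

Lemma Rsum_remove n k f : (k < n)%nat ->
  Rsum n f = Rsum n (fun i => if Nat.eqb i k then 0 else f i) + f k.
Proof.
  intros Hk. rewrite <- (Rsum_kron_r n k f Hk), <- Rsum_plus. apply Rsum_ext.
  intros. destruct (Nat.eqb i k); lra.
Qed.

Lemma Rsum_ge_term n k f : (k < n)%nat -> (forall i, (i < n)%nat -> 0 <= f i) -> f k <= Rsum n f.
Proof.
  intros Hk H. rewrite (Rsum_remove n k f Hk).
  assert (0 <= Rsum n (fun i => if Nat.eqb i k then 0 else f i)).
  { apply Rsum_nonneg. intros. destruct (Nat.eqb i k). lra. auto. }
  lra.
Qed.

Lemma Rsum_ind_length (l : list nat) (g : nat -> bool) :
  fold_right Rplus 0 (map (fun i => if g i then 1 else 0) l) = INR (length (filter g l)).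
Proof.
  induction l. reflexivity. cbn [map fold_right filter]. rewrite IHl.
  destruct (g a); cbn [length]. rewrite S_INR. lra. lra.
Qed.

Lemma Ppow_S N P t u v : Ppow N P (S t) u v = Rsum N (fun k => Ppow N P t u k * P k v).
Proof. reflexivity. Qed.

Lemma Ppow_S_left N P t u v : (u < N)%nat -> (v < N)%nat ->
  Ppow N P (S t) u v = Rsum N (fun k => P u k * Ppow N P t k v).
Proof.
  revert v. induction t; intros v Hu Hv.
  - rewrite Ppow_S. simpl Ppow. rewrite Rsum_kron_l by auto. rewrite Rsum_kron_r by auto. reflexivity.
  - rewrite Ppow_S.
    rewrite (Rsum_ext _ _ (fun k => Rsum N (fun j => P u j * Ppow N P t j k * P k v))).
    2:{ intros k Hk. rewrite IHt by auto. rewrite <- Rsum_scal_r. reflexivity. }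
    rewrite Rsum_swap. apply Rsum_ext. intros j Hj. rewrite Ppow_S, <- Rsum_scal_l.
    apply Rsum_ext. intros. ring.
Qed.

Lemma Ppow_add N P s t x v : (v < N)%nat ->
  Ppow N P (s + t) x v = Rsum N (fun k => Ppow N P s x k * Ppow N P t k v).
Proof.
  revert v. induction t; intros v Hv.
  - rewrite Nat.add_0_r. simpl Ppow. rewrite Rsum_kron_r by auto. reflexivity.
  - rewrite Nat.add_succ_r, Ppow_S.
    rewrite (Rsum_ext _ _ (fun j => Rsum N (fun k => Ppow N P s x k * Ppow N P t k j * P j v))).
    2:{ intros j Hj. rewrite IHt by auto. rewrite <- Rsum_scal_r. reflexivity. }
    rewrite Rsum_swap. apply Rsum_ext. intros k Hk. rewrite Ppow_S, <- Rsum_scal_l.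
    apply Rsum_ext. intros. ring.
Qed.

Lemma Ppow_nonneg N P t u v : stochastic N P -> (u < N)%nat -> (v < N)%nat -> 0 <= Ppow N P t u v.
Proof.
  intros [Hnn _]. revert v. induction t; intros v Hu Hv.
  - simpl. destruct (Nat.eqb u v); lra.
  - rewrite Ppow_S. apply Rsum_nonneg. intros. apply Rmult_le_pos; auto.
Qed.

Lemma Ppow_row N P t u : stochastic N P -> (u < N)%nat -> Rsum N (fun v => Ppow N P t u v) = 1.
Proof.
  intros Hs Hu. induction t.
  - simpl. transitivity (Rsum N (fun i => (if Nat.eqb u i then 1 else 0) * (fun _ => 1) i)).
    apply Rsum_ext. intros. destruct (Nat.eqb u i); lra. apply Rsum_kron_l; auto.
  - rewrite (Rsum_ext _ _ (fun v => Rsum N (fun k => Ppow N P t u k * P k v))) by (intros; reflexivity).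
    rewrite Rsum_swap.
    rewrite (Rsum_ext _ _ (fun k => Ppow N P t u k * 1)). rewrite Rsum_scal_r. rewrite <- IHt at 2. ring_simplify. apply Rsum_ext; reflexivity.
    intros k Hk. rewrite Rsum_scal_l. destruct Hs as [_ Hr]. rewrite Hr by auto. reflexivity.
Qed.

Lemma pi_stat_pow N P pi t v : stationary N P pi -> (v < N)%nat ->
  Rsum N (fun u => pi u * Ppow N P t u v) = pi v.
Proof.
  intros Hst. revert v. induction t; intros v Hv.
  - simpl. rewrite Rsum_kron_r by auto. reflexivity.
  - rewrite (Rsum_ext _ _ (fun u => Rsum N (fun k => pi u * Ppow N P t u k * P k v))).
    2:{ intros. rewrite Ppow_S, <- Rsum_scal_l. apply Rsum_ext. intros. ring. }
    rewrite Rsum_swap.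
    rewrite (Rsum_ext _ _ (fun k => pi k * P k v)).
    destruct Hst as [_ [_ H]]. apply H; auto.
    intros k Hk. rewrite Rsum_scal_r, IHt by auto. reflexivity.
Qed.

Lemma pi_pos N P pi v : ergodic N P -> stationary N P pi -> (v < N)%nat -> 0 < pi v.
Proof.
  intros [Hs [Hirr _]] Hst Hv.
  assert (Hex : exists u, (u < N)%nat /\ 0 < pi u).
  { destruct (Classical_Prop.classic (exists u, (u < N)%nat /\ 0 < pi u)) as [H|H]; auto.
    exfalso. destruct Hst as [Hnn [H1 _]].
    assert (Rsum N pi <= 0).
    { rewrite <- (Rsum_const0 N). apply Rsum_le. intros i Hi.
      destruct (Rle_dec (pi i) 0); auto. exfalso; apply H; exists i; split; auto; lra. }
    lra. }
  destruct Hex as [u [Hu Hpu]]. destruct (Hirr u v Hu Hv) as [t Ht].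
  rewrite <- (pi_stat_pow N P pi t v Hst Hv).
  eapply Rlt_le_trans. 2: apply (Rsum_ge_term N u (fun u => pi u * Ppow N P t u v) Hu).
  apply Rmult_lt_0_compat; auto.
  intros. apply Rmult_le_pos. destruct Hst as [Hnn _]; auto. apply Ppow_nonneg; auto.
Qed.

Lemma rev_pow N P pi t u v : stochastic N P -> reversible N P pi -> (u < N)%nat -> (v < N)%nat ->
  pi u * Ppow N P t u v = pi v * Ppow N P t v u.
Proof.
  intros Hs Hrev. revert u v. induction t; intros u v Hu Hv.
  - simpl. destruct (Nat.eq_dec u v). subst; reflexivity.
    replace (Nat.eqb u v) with false by (symmetry; apply Nat.eqb_neq; auto).
    replace (Nat.eqb v u) with false by (symmetry; apply Nat.eqb_neq; auto). lra.
  - rewrite Ppow_S, (Ppow_S_left N P t v u) by auto.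
    rewrite <- !Rsum_scal_l. apply Rsum_ext. intros k Hk.
    transitivity ((pi u * Ppow N P t u k) * P k v). ring.
    rewrite IHt by auto.
    transitivity (Ppow N P t k u * (pi k * P k v)). ring.
    rewrite Hrev by auto. ring.
Qed.

Lemma posneg r : r = Rmax r 0 - Rmax (-r) 0 /\ Rabs r = Rmax r 0 + Rmax (-r) 0 /\
   0 <= Rmax r 0 /\ 0 <= Rmax (-r) 0.
Proof.
  unfold Rmax, Rabs. destruct (Rle_dec r 0); destruct (Rle_dec (-r) 0); destruct (Rcase_abs r); lra.
Qed.

Lemma contract N (M : nat -> nat -> R) (nu : nat -> R) c :
  (forall x y, (x<N)%nat -> (y<N)%nat -> Rsum N (fun u => Rabs (M x u - M y u)) <= 2*c) ->
  Rsum N nu = 0 ->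
  Rsum N (fun u => Rabs (Rsum N (fun x => nu x * M x u))) <= c * Rsum N (fun x => Rabs (nu x)).
Proof.
  intros HM H0.
  set (a := fun x => Rmax (nu x) 0). set (b := fun x => Rmax (- nu x) 0).
  assert (Hnu : forall x, nu x = a x - b x) by (intros; apply posneg).
  assert (Hab : forall x, Rabs (nu x) = a x + b x) by (intros; apply posneg).
  assert (Ha : forall x, 0 <= a x) by (intros; apply posneg).
  assert (Hb : forall x, 0 <= b x) by (intros; apply posneg).
  set (ma := Rsum N a). set (mb := Rsum N b).
  assert (Hm : ma = mb).
  { unfold ma, mb. rewrite <- (Rsum_ext N (fun x => a x - b x) nu) in H0 by (intros; auto).
    rewrite Rsum_minus in H0. lra. }
  assert (Habs : Rsum N (fun x => Rabs (nu x)) = ma + mb).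
  { unfold ma, mb. rewrite <- Rsum_plus. apply Rsum_ext. intros; auto. }
  rewrite Habs.
  assert (Hma0 : 0 <= ma) by (apply Rsum_nonneg; auto).
  destruct (Rle_lt_dec ma 0) as [Hz|Hp].
  - assert (Hzero : forall x, (x < N)%nat -> nu x = 0).
    { intros x Hx. rewrite Hnu.
      assert (a x <= ma) by (apply Rsum_ge_term; auto).
      assert (b x <= mb) by (apply Rsum_ge_term; auto). specialize (Ha x); specialize (Hb x). lra. }
    rewrite (Rsum_ext _ _ (fun _ => 0)). rewrite Rsum_const0.
    replace (ma + mb) with 0 by lra. lra.
    intros u Hu. rewrite (Rsum_ext _ _ (fun _ => 0)). rewrite Rsum_const0. apply Rabs_R0.
    intros x Hx. rewrite Hzero by auto. lra.
  - assert (Hkey : forall u, ma * Rsum N (fun x => nu x * M x u) =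
        Rsum N (fun x => Rsum N (fun y => a x * b y * (M x u - M y u)))).
    { intros u.
      rewrite (Rsum_ext _ (fun x => Rsum N (fun y => a x * b y * (M x u - M y u)))
                 (fun x => a x * M x u * mb - a x * Rsum N (fun y => b y * M y u))).
      2:{ intros x Hx. unfold mb. rewrite <- !Rsum_scal_l, <- Rsum_minus.
          apply Rsum_ext. intros. ring. }
      rewrite Rsum_minus, Rsum_scal_r, Rsum_scal_r.
      rewrite (Rsum_ext _ (fun x => nu x * M x u) (fun x => a x * M x u - b x * M x u)).
      2:{ intros. rewrite Hnu. ring. }
      rewrite Rsum_minus. fold ma. rewrite Hm. ring. }
    assert (Hbig : ma * Rsum N (fun u => Rabs (Rsum N (fun x => nu x * M x u))) <= 2 * c * ma * mb).
    { rewrite <- Rsum_scal_l.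
      rewrite (Rsum_ext _ _ (fun u => Rabs (Rsum N (fun x => Rsum N (fun y => a x * b y * (M x u - M y u)))))).
      2:{ intros u Hu. rewrite <- Hkey. rewrite Rabs_mult, (Rabs_right ma) by lra. reflexivity. }
      eapply Rle_trans.
      { apply Rsum_le. intros u Hu. eapply Rle_trans. apply Rsum_abs_le. apply Rsum_le. intros x Hx.
        apply Rsum_abs_le. }
      rewrite Rsum_swap.
      rewrite (Rsum_ext _ _ (fun x => Rsum N (fun y => a x * b y * Rsum N (fun u => Rabs (M x u - M y u))))).
      2:{ intros x Hx. rewrite Rsum_swap. apply Rsum_ext. intros y Hy. rewrite <- Rsum_scal_l.
          apply Rsum_ext. intros. rewrite Rabs_mult, (Rabs_right (a x * b y)). reflexivity.
          apply Rle_ge, Rmult_le_pos; auto. }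
      apply Rle_trans with (Rsum N (fun x => Rsum N (fun y => a x * b y * (2 * c)))).
      { apply Rsum_le; intros x Hx; apply Rsum_le; intros y Hy. apply Rmult_le_compat_l.
        apply Rmult_le_pos; auto. apply HM; auto. }
      rewrite (Rsum_ext _ _ (fun x => a x * (2 * c * mb))). rewrite Rsum_scal_r. fold ma. lra.
      intros x Hx. unfold mb. rewrite <- Rsum_scal_l, <- Rsum_scal_l. apply Rsum_ext. intros. ring. }
    apply (Rmult_le_reg_l ma). auto. rewrite Hm in *. nra.
Qed.

Definition dbar_le N P s c := forall x y, (x<N)%nat -> (y<N)%nat ->
  Rsum N (fun u => Rabs (Ppow N P s x u - Ppow N P s y u)) <= 2*c.

Lemma dbar_one N P s : stochastic N P -> dbar_le N P s 1.
Proof.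
  intros Hs x y Hx Hy.
  apply Rle_trans with (Rsum N (fun u => Ppow N P s x u + Ppow N P s y u)).
  apply Rsum_le. intros u Hu.
  assert (0 <= Ppow N P s x u) by (apply Ppow_nonneg; auto).
  assert (0 <= Ppow N P s y u) by (apply Ppow_nonneg; auto).
  unfold Rabs; destruct Rcase_abs; lra.
  rewrite Rsum_plus, !Ppow_row by auto. lra.
Qed.

Lemma dbar_nonneg N P s c x : dbar_le N P s c -> (x < N)%nat -> 0 <= c.
Proof.
  intros H Hx. specialize (H x x Hx Hx).
  assert (0 <= Rsum N (fun u => Rabs (Ppow N P s x u - Ppow N P s x u))) by (apply Rsum_nonneg; intros; apply Rabs_pos).
  lra.
Qed.

Lemma dbar_mult N P s t c1 c2 : stochastic N P -> dbar_le N P s c1 -> dbar_le N P t c2 ->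
  dbar_le N P (s + t) (c1 * c2).
Proof.
  intros Hs H1 H2 x y Hx Hy.
  assert (Hc2 : 0 <= c2) by (eapply dbar_nonneg; eauto).
  rewrite (Rsum_ext _ _ (fun u => Rabs (Rsum N (fun k => (Ppow N P s x k - Ppow N P s y k) * Ppow N P t k u)))).
  2:{ intros u Hu. rewrite !Ppow_add by auto. rewrite <- Rsum_minus. f_equal. apply Rsum_ext. intros. ring. }
  eapply Rle_trans. apply contract. exact H2.
  rewrite Rsum_minus, !Ppow_row by auto. lra.
  specialize (H1 x y Hx Hy). nra.
Qed.

Lemma dTV_mono1 N P pi v t : stochastic N P -> stationary N P pi -> (v < N)%nat ->
  dTV_row N P pi v (S t) <= dTV_row N P pi v t.
Proof.
  intros Hs Hst Hv. unfold dTV_row. apply Rmult_le_compat_l. lra.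
  rewrite (Rsum_ext _ _ (fun u => Rabs (Rsum N (fun k => (Ppow N P t v k - pi k) * P k u)))).
  2:{ intros u Hu. rewrite Ppow_S. destruct Hst as [_ [_ Hp]]. rewrite <- (Hp u Hu) at 1.
      rewrite <- Rsum_minus. f_equal. apply Rsum_ext. intros. ring. }
  eapply Rle_trans. apply Rsum_le. intros u Hu. apply Rsum_abs_le.
  rewrite Rsum_swap. apply Rsum_le. intros k Hk.
  rewrite (Rsum_ext _ _ (fun u => Rabs (Ppow N P t v k - pi k) * P k u)).
  rewrite Rsum_scal_l. destruct Hs as [Hnn Hr]. rewrite Hr by auto. lra.
  intros u Hu. rewrite Rabs_mult, (Rabs_right (P k u)). reflexivity.
  destruct Hs as [Hnn _]. apply Rle_ge, Hnn; auto.
Qed.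

Lemma dTV_mono N P pi v t t' : stochastic N P -> stationary N P pi -> (v < N)%nat ->
  (t <= t')%nat -> dTV_row N P pi v t' <= dTV_row N P pi v t.
Proof.
  intros Hs Hst Hv Hle. induction Hle. lra.
  eapply Rle_trans. apply dTV_mono1; auto. auto.
Qed.

Lemma dbar_tstar N P pi tstar : stochastic N P -> stationary N P pi ->
  is_mixing_rate N P pi tstar -> dbar_le N P tstar (/2).
Proof.
  intros Hs Hst [Hm _].
  assert (Hd : forall x, (x < N)%nat -> Rsum N (fun u => Rabs (Ppow N P tstar x u - pi u)) <= /2).
  { intros x Hx. destruct (Hm x Hx) as [t [Ht Hd]].
    pose proof (dTV_mono N P pi x t tstar Hs Hst Hx Ht). unfold dTV_row in *. lra. }
  intros x y Hx Hy.
  apply Rle_trans with (Rsum N (fun u => Rabs (Ppow N P tstar x u - pi u) + Rabs (Ppow N P tstar y u - pi u))).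
  apply Rsum_le. intros u Hu.
  replace (Ppow N P tstar x u - Ppow N P tstar y u) with ((Ppow N P tstar x u - pi u) - (Ppow N P tstar y u - pi u)) by ring.
  eapply Rle_trans. apply Rabs_triang. rewrite Rabs_Ropp. lra.
  rewrite Rsum_plus. pose proof (Hd x Hx). pose proof (Hd y Hy). lra.
Qed.

Lemma dbar_geom N P pi tstar k r : stochastic N P -> stationary N P pi ->
  is_mixing_rate N P pi tstar -> dbar_le N P (k * tstar + r) ((/2)^k).
Proof.
  intros Hs Hst Hm. induction k.
  - simpl. apply dbar_one; auto.
  - replace (S k * tstar + r)%nat with (tstar + (k * tstar + r))%nat by lia.
    simpl pow. apply dbar_mult; auto. eapply dbar_tstar; eauto.
Qed.

Definition bterm N P w s := Rsum N (fun u => Rabs (Ppow N P (S s) w u - Ppow N P s w u)).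

Lemma bterm_bound N P w s c : stochastic N P -> (w < N)%nat -> dbar_le N P s c -> bterm N P w s <= 2 * c.
Proof.
  intros Hs Hw Hd. unfold bterm.
  rewrite (Rsum_ext _ _ (fun u => Rabs (Rsum N (fun x => P w x * (Ppow N P s x u - Ppow N P s w u))))).
  2:{ intros u Hu. rewrite Ppow_S_left by auto. f_equal.
      rewrite (Rsum_ext _ (fun x => P w x * (Ppow N P s x u - Ppow N P s w u))
               (fun x => P w x * Ppow N P s x u - P w x * Ppow N P s w u)) by (intros; ring).
      rewrite Rsum_minus, Rsum_scal_r. destruct Hs as [_ Hr]. rewrite Hr by auto. ring. }
  eapply Rle_trans. apply Rsum_le. intros u Hu. apply Rsum_abs_le.
  rewrite Rsum_swap.
  apply Rle_trans with (Rsum N (fun x => P w x * (2 * c))).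
  apply Rsum_le. intros x Hx. rewrite <- (Rsum_ext _ (fun u => P w x * Rabs (Ppow N P s x u - Ppow N P s w u))).
  rewrite Rsum_scal_l. apply Rmult_le_compat_l. destruct Hs as [Hnn _]; auto. apply Hd; auto.
  intros u Hu. rewrite Rabs_mult, (Rabs_right (P w x)). reflexivity. destruct Hs as [Hnn _]. apply Rle_ge, Hnn; auto.
  rewrite Rsum_scal_r. destruct Hs as [_ Hr]. rewrite Hr by auto. lra.
Qed.

Lemma bterm_nonneg N P w s : 0 <= bterm N P w s.
Proof. apply Rsum_nonneg. intros; apply Rabs_pos. Qed.

Lemma bsum_k N P pi tstar w k : stochastic N P -> stationary N P pi ->
  is_mixing_rate N P pi tstar -> (w < N)%nat ->
  Rsum (k * tstar) (fun s => bterm N P w s) <= 4 * INR tstar * (1 - (/2)^k).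
Proof.
  intros Hs Hst Hm Hw. induction k.
  - simpl. rewrite Rsum_0. lra.
  - replace (S k * tstar)%nat with (k * tstar + tstar)%nat by lia.
    rewrite Rsum_add_range.
    apply Rle_trans with (4 * INR tstar * (1 - (/2)^k) + Rsum tstar (fun _ => 2 * (/2)^k)).
    apply Rplus_le_compat. auto. apply Rsum_le. intros j Hj. apply bterm_bound; auto.
    eapply dbar_geom; eauto.
    assert (Hc : forall n c, Rsum n (fun _ => c) = INR n * c).
    { induction n; intros. rewrite Rsum_0. simpl. lra. rewrite Rsum_S, IHn, S_INR. lra. }
    rewrite Hc. simpl pow. lra.
Qed.

Lemma bsum N P pi tstar w n : stochastic N P -> stationary N P pi ->
  is_mixing_rate N P pi tstar -> (w < N)%nat -> (1 <= tstar)%nat ->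
  Rsum n (fun s => bterm N P w s) <= 4 * INR tstar.
Proof.
  intros Hs Hst Hm Hw Ht.
  apply Rle_trans with (Rsum (n * tstar) (fun s => bterm N P w s)).
  apply Rsum_mono_range. nia. intros; apply bterm_nonneg.
  eapply Rle_trans. eapply bsum_k; eauto.
  assert (0 < (/2)^n) by (apply pow_lt; lra).
  assert (0 <= INR tstar) by apply pos_INR. nra.
Qed.

Lemma Icount_0 s v u : Icount s v u 0 0 = 0%nat.
Proof. reflexivity. Qed.

Lemma Icount_S0 s v u i : Icount s v u 0 (S i) = (Icount s v u 0 i + (if Nat.eqb (s v i) u then 1 else 0))%nat.
Proof.
  unfold Icount. rewrite !Nat.sub_0_r, seq_S, filter_app, length_app. simpl.
  destruct (Nat.eqb (s v i) u); simpl; lia.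
Qed.

Lemma Icount_split s v u a b : (a <= b)%nat -> (Icount s v u a b + Icount s v u 0 a)%nat = Icount s v u 0 b.
Proof.
  intros H. unfold Icount. rewrite !Nat.sub_0_r.
  assert (E : seq 0 b = seq 0 a ++ seq a (b - a)).
  { replace b with (a + (b - a))%nat at 1 by lia. rewrite seq_app. reflexivity. }
  rewrite E, filter_app, length_app. lia.
Qed.

Lemma Icount_mono s v u a b : (a <= b)%nat -> (Icount s v u 0 a <= Icount s v u 0 b)%nat.
Proof. intros H. rewrite <- (Icount_split s v u a b H). lia. Qed.

Lemma Icount_sum N s v i : (forall j, (s v j < N)%nat) ->
  Rsum N (fun u => INR (Icount s v u 0 i)) = INR i.
Proof.
  intros Hs. induction i.
  - rewrite (Rsum_ext _ _ (fun _ => 0)). apply Rsum_const0. intros; reflexivity.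
  - rewrite (Rsum_ext _ _ (fun u => INR (Icount s v u 0 i) + (if Nat.eqb (s v i) u then 1 else 0) * 1)).
    rewrite Rsum_plus, IHi, Rsum_kron_l by auto. rewrite S_INR. lra.
    intros u Hu. rewrite Icount_S0, plus_INR. destruct (Nat.eqb (s v i) u); simpl; lra.
Qed.

Lemma Icount_zero s v u a b : (forall j, s v j <> u) -> Icount s v u a b = 0%nat.
Proof.
  intros H. unfold Icount. generalize (b - a)%nat as n. intros n. revert a.
  induction n; intros a. reflexivity. simpl. replace (Nat.eqb (s v a) u) with false.
  apply IHn. symmetry. apply Nat.eqb_neq. auto.
Qed.

Lemma SRT_facts N P s v j : is_SRT N P s -> (v < N)%nat -> (s v j < N)%nat /\ 0 < P v (s v j).
Proof. intros H Hv. destruct (H v j Hv) as [[H1 [H2 _]] _]. auto. Qed.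

Lemma SRT_zero N P s v u a b : is_SRT N P s -> (v < N)%nat -> P v u <= 0 -> Icount s v u a b = 0%nat.
Proof.
  intros H Hv Hp. apply Icount_zero. intros j E. destruct (SRT_facts N P s v j H Hv). subst. lra.
Qed.

Lemma SRT_upper N P s v u i : stochastic N P -> is_SRT N P s -> (v < N)%nat -> (u < N)%nat ->
  INR (Icount s v u 0 i) < INR i * P v u + 1.
Proof.
  intros Hst H Hv Hu. assert (Hp : 0 <= P v u) by (destruct Hst as [Hnn _]; auto).
  induction i. simpl. lra.
  rewrite Icount_S0, plus_INR, S_INR. destruct (Nat.eqb (s v i) u) eqn:E.
  - apply Nat.eqb_eq in E. destruct (H v i Hv) as [[_ [_ HT]] _]. rewrite E in HT.
    rewrite S_INR in HT. simpl INR. lra.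
  - simpl INR. lra.
Qed.

Lemma find_start (Q : nat -> Prop) (dec : forall j, Q j \/ ~ Q j) z :
  exists j0, (j0 <= z)%nat /\ (forall j, (j0 <= j < z)%nat -> Q j) /\ (j0 = 0%nat \/ ~ Q (j0 - 1)%nat).
Proof.
  assert (forall a, (a <= z)%nat -> (forall j, (a <= j < z)%nat -> Q j) ->
     exists j0, (j0 <= z)%nat /\ (forall j, (j0 <= j < z)%nat -> Q j) /\ (j0 = 0%nat \/ ~ Q (j0 - 1)%nat)).
  { induction a; intros Ha Hq. exists 0%nat; auto.
    destruct (dec a). apply IHa. lia. intros j Hj. destruct (Nat.eq_dec j a). subst; auto. apply Hq; lia.
    exists (S a). split; auto. split; auto. right. replace (S a - 1)%nat with a by lia. auto. }
  apply (H z). lia. intros; lia.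
Qed.

Lemma div_le a p t : 0 < p -> a / p <= t -> a <= t * p.
Proof. intros Hp H. apply (Rmult_le_compat_r p) in H; [|lra]. unfold Rdiv in H.
  rewrite Rmult_assoc, Rinv_l, Rmult_1_r in H; lra. Qed.

Lemma le_div a p t : 0 < p -> a <= t * p -> a / p <= t.
Proof. intros Hp H. unfold Rdiv. apply (Rmult_le_reg_r p); auto.
  rewrite Rmult_assoc, Rinv_l, Rmult_1_r; lra. Qed.

Lemma SRT_lower N P s v u z : stochastic N P -> is_SRT N P s -> (v < N)%nat -> (u < N)%nat ->
  INR z * P v u - 1 <= INR (Icount s v u 0 z).
Proof.
  intros Hst H Hv Hu. destruct Hst as [Hnn Hrow].
  set (c := fun u i => Icount s v u 0 i).
  change (INR z * P v u - 1 <= INR (c u z)).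
  apply Rnot_lt_le. intros Hf.
  set (k := c u z). fold k in Hf.
  assert (Hk0 : 0 <= INR k) by apply pos_INR.
  assert (Hz0 : 0 <= INR z) by apply pos_INR.
  assert (Hp0 : 0 <= P v u) by auto.
  assert (Hp : 0 < P v u).
  { destruct (Rle_lt_dec (P v u) 0); auto. assert (P v u = 0) by lra. rewrite H0 in Hf. lra. }
  set (tau := (INR k + 1) / P v u).
  assert (Htp : tau * P v u = INR k + 1) by (unfold tau; field; lra).
  assert (Htz : tau < INR z).
  { apply (Rmult_lt_reg_r (P v u)); auto. lra. }
  assert (Htau0 : 0 < tau) by nra.
  set (pr := fun j => (INR (c (s v j) j) + 1) / P v (s v j)).
  destruct (find_start (fun j => pr j <= tau) (fun j => match Rle_dec (pr j) tau with left h => or_introl h | right h => or_intror h end) z)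
    as [j0 [Hj0z [HQ Hstart]]].
  assert (Hinv : forall u', (u' < N)%nat -> forall d, (j0 + d <= z)%nat ->
            (c u' (j0 + d)%nat <= c u' j0)%nat \/ INR (c u' (j0 + d)%nat) <= tau * P v u').
  { intros u' Hu' d. induction d; intros Hd.
    - left. rewrite Nat.add_0_r. lia.
    - replace (j0 + S d)%nat with (S (j0 + d))%nat by lia.
      unfold c. rewrite Icount_S0. fold c.
      destruct (Nat.eqb (s v (j0 + d)%nat) u') eqn:E.
      + apply Nat.eqb_eq in E. right.
        assert (Hq : pr (j0 + d)%nat <= tau) by (apply HQ; lia).
        unfold pr in Hq. rewrite E in Hq.
        destruct (SRT_facts N P s v (j0 + d)%nat H Hv) as [_ Hpp]. rewrite E in Hpp.
        rewrite plus_INR. simpl INR.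
        apply div_le in Hq; [|auto]. unfold c in Hq. lra.
      + rewrite Nat.add_0_r. apply IHd. lia. }
  assert (Hinvz : forall u', (u' < N)%nat -> (c u' z <= c u' j0)%nat \/ INR (c u' z) <= tau * P v u').
  { intros u' Hu'. replace z with (j0 + (z - j0))%nat by lia. apply Hinv; auto. lia. }
  assert (Hsum : Rsum N (fun u' => INR (c u' z) - INR (c u' j0)) = INR z - INR j0).
  { rewrite Rsum_minus. unfold c. rewrite !Icount_sum; auto.
    intros j; apply (SRT_facts N P s v j H Hv). intros j; apply (SRT_facts N P s v j H Hv). }
  assert (Hterm : INR j0 <= tau /\ forall u', (u' < N)%nat ->
             INR (c u' z) - INR (c u' j0) <= (tau - INR j0) * P v u').
  { destruct (Nat.eq_dec j0 0) as [E | Hne].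
    - rewrite E. replace (INR 0) with 0 by reflexivity. split. lra. intros u' Hu'.
      replace (INR (c u' 0%nat)) with 0 by reflexivity.
      assert (0 <= P v u') by auto.
      destruct (Hinvz u' Hu') as [h|h]. rewrite E in h. assert (c u' z = 0%nat) by (change (c u' 0%nat) with 0%nat in h; lia).
      rewrite H1. replace (INR 0) with 0 by reflexivity. nra. lra.
    - destruct Hstart as [E|Hnq]. contradiction.
      destruct j0 as [|s0]. contradiction. replace (S s0 - 1)%nat with s0 in Hnq by lia.
      apply Rnot_le_lt in Hnq.
      destruct (H v s0 Hv) as [_ Hmin].
      assert (Hcm : forall u', (c u' s0 <= c u' (S s0))%nat /\ (c u' (S s0) <= c u' z)%nat).
      { intros; split; apply Icount_mono; lia. }
      assert (HnotTu : ~ in_T N P s v s0 u).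
      { intros HT. specialize (Hmin u HT).
        assert ((INR (c u s0) + 1) / P v u <= tau).
        { apply le_div; auto. rewrite Htp. destruct (Hcm u). apply le_INR in H0. apply le_INR in H1. unfold k. lra. }
        unfold pr, c in *. lra. }
      assert (Hus0 : INR (S s0) * P v u <= INR (c u s0)).
      { apply Rnot_lt_le. intro h. apply HnotTu. split; auto. split; auto. unfold c in h. lra. }
      assert (Hj0t : INR (S s0) < tau).
      { destruct (Hcm u). apply le_INR in H0. apply le_INR in H1. fold k in H1.
        apply (Rmult_lt_reg_r (P v u)); auto. lra. }
      split. lra. intros u' Hu'.
      assert (Hp' : 0 <= P v u') by auto.
      destruct (Hcm u') as [Hc1 Hc2]. apply le_INR in Hc1.
      destruct (Classical_Prop.classic (in_T N P s v s0 u')) as [HT|HT].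
      + pose proof (Hmin u' HT) as Hm'.
        destruct HT as [_ [Hpp _]].
        assert (Hlt : tau * P v u' < INR (c u' s0) + 1).
        { apply Rnot_le_lt. intro h. apply le_div in h; auto. unfold pr, c in *. lra. }
        destruct (Hinvz u' Hu') as [h|h].
        * apply le_INR in h. nra.
        * assert (INR (c u' z) < INR (c u' (S s0) + 1)) by (rewrite plus_INR; simpl INR; lra).
          apply INR_lt in H0. assert (c u' z <= c u' (S s0))%nat by lia. apply le_INR in H1. nra.
      + assert (Hge : INR (S s0) * P v u' <= INR (c u' s0)).
        { destruct (Rle_lt_dec (P v u') 0). assert (P v u' = 0) by lra. rewrite H0. rewrite Rmult_0_r. apply pos_INR.
          apply Rnot_lt_le. intro h. apply HT. split; auto. split; auto. unfold c in h. lra. }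
        destruct (Hinvz u' Hu') as [h|h].
        * apply le_INR in h. nra.
        * nra. }
  destruct Hterm as [Hj0t Hterm].
  assert (INR z - INR j0 <= (tau - INR j0) * 1).
  { rewrite <- Hsum, <- (Hrow v Hv), <- Rsum_scal_l. apply Rsum_le. intros. apply Hterm; auto. }
  lra.
Qed.

Definition Sc N s chi0 t v := snd (router_state N s chi0 t) v.

Lemma chi_S N s chi0 t u : chi_conf N s chi0 (S t) u =
  nsum N (fun v => Icount s v u (Sc N s chi0 t v) (Sc N s chi0 t v + chi_conf N s chi0 t v)).
Proof. unfold chi_conf, Sc. simpl. destruct (router_state N s chi0 t). reflexivity. Qed.

Lemma Sc_S N s chi0 t v : Sc N s chi0 (S t) v = (Sc N s chi0 t v + chi_conf N s chi0 t v)%nat.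
Proof. unfold chi_conf, Sc. simpl. destruct (router_state N s chi0 t). reflexivity. Qed.

Lemma Sc_0 N s chi0 v : Sc N s chi0 0 v = 0%nat.
Proof. reflexivity. Qed.

Definition Dv (P : nat -> nat -> R) s v u z := INR (Icount s v u 0 z) - INR z * P v u.
Definition DT N P s chi0 t v u := Dv P s v u (Sc N s chi0 t v).

Definition gg N P s chi0 t w := INR (chi_conf N s chi0 t w) - mu_dist N P chi0 t w.

Lemma gg_rec N P s chi0 t w : (w < N)%nat ->
  gg N P s chi0 (S t) w = Rsum N (fun v => gg N P s chi0 t v * P v w)
     + Rsum N (fun v => DT N P s chi0 (S t) v w - DT N P s chi0 t v w).
Proof.
  intros Hw. unfold gg. rewrite chi_S, INR_nsum.
  rewrite (Rsum_ext _ _ (fun v => (DT N P s chi0 (S t) v w - DT N P s chi0 t v w) + INR (chi_conf N s chi0 t v) * P v w)).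
  2:{ intros v Hv. unfold DT, Dv. rewrite Sc_S.
      rewrite <- (Icount_split s v w (Sc N s chi0 t v) (Sc N s chi0 t v + chi_conf N s chi0 t v)) by lia.
      rewrite !plus_INR. ring. }
  rewrite Rsum_plus.
  assert (Hmu : mu_dist N P chi0 (S t) w = Rsum N (fun v => mu_dist N P chi0 t v * P v w)).
  { unfold mu_dist. rewrite (Rsum_ext _ _ (fun v => Rsum N (fun k => INR (chi0 v) * Ppow N P t v k * P k w))).
    rewrite Rsum_swap. apply Rsum_ext. intros. rewrite Rsum_scal_r. reflexivity.
    intros. rewrite Ppow_S, <- Rsum_scal_l. apply Rsum_ext. intros. ring. }
  rewrite Hmu.
  rewrite (Rsum_ext N (fun v => (INR (chi_conf N s chi0 t v) - mu_dist N P chi0 t v) * P v w)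
            (fun v => INR (chi_conf N s chi0 t v) * P v w - mu_dist N P chi0 t v * P v w)) by (intros; ring).
  rewrite !Rsum_minus. ring.
Qed.

Lemma gg_0 N P s chi0 w : (w < N)%nat -> gg N P s chi0 0 w = 0.
Proof.
  intros Hw. unfold gg, mu_dist. simpl Ppow. rewrite Rsum_kron_r by auto.
  unfold chi_conf. simpl. ring.
Qed.

Lemma DT_0 N P s chi0 v u : DT N P s chi0 0 v u = 0.
Proof. unfold DT, Dv. rewrite Sc_0. simpl. ring. Qed.

Definition hh N P s chi0 t w := gg N P s chi0 t w - Rsum N (fun v => DT N P s chi0 t v w).
Definition rr N P s chi0 t w :=
  Rsum N (fun y => Rsum N (fun x => DT N P s chi0 t x y) * P y w) - Rsum N (fun x => DT N P s chi0 t x w).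

Lemma hh_rec N P s chi0 t w : (w < N)%nat ->
  hh N P s chi0 (S t) w = Rsum N (fun v => hh N P s chi0 t v * P v w) + rr N P s chi0 t w.
Proof.
  intros Hw. unfold hh, rr. rewrite gg_rec by auto. rewrite Rsum_minus.
  rewrite (Rsum_ext N (fun v => (gg N P s chi0 t v - Rsum N (fun v0 => DT N P s chi0 t v0 v)) * P v w)
     (fun v => gg N P s chi0 t v * P v w - Rsum N (fun v0 => DT N P s chi0 t v0 v) * P v w)) by (intros; ring).
  rewrite Rsum_minus. ring.
Qed.

Lemma hh_0 N P s chi0 w : (w < N)%nat -> hh N P s chi0 0 w = 0.
Proof.
  intros Hw. unfold hh. rewrite gg_0 by auto.
  rewrite (Rsum_ext _ _ (fun _ => 0)). rewrite Rsum_const0. ring. intros; apply DT_0.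
Qed.

Lemma lin_rec N P (h r : nat -> nat -> R) :
  (forall w, (w < N)%nat -> h 0%nat w = 0) ->
  (forall t w, (w < N)%nat -> h (S t) w = Rsum N (fun v => h t v * P v w) + r t w) ->
  forall T w, (w < N)%nat ->
  h T w = Rsum T (fun s => Rsum N (fun x => r (T - 1 - s)%nat x * Ppow N P s x w)).
Proof.
  intros H0 HS T. induction T; intros w Hw.
  - rewrite H0 by auto. reflexivity.
  - rewrite HS by auto. rewrite Rsum_first.
    replace (S T - 1 - 0)%nat with T by lia. simpl Ppow at 1. rewrite Rsum_kron_r by auto.
    rewrite Rplus_comm. f_equal.
    rewrite (Rsum_ext N (fun v => h T v * P v w)
      (fun v => Rsum T (fun s => Rsum N (fun x => r (T - 1 - s)%nat x * Ppow N P s x v * P v w)))).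
    2:{ intros v Hv. rewrite IHT by auto. rewrite <- Rsum_scal_r. apply Rsum_ext. intros.
        rewrite <- Rsum_scal_r. reflexivity. }
    rewrite Rsum_swap. apply Rsum_ext. intros s0 Hs0.
    replace (S T - 1 - S s0)%nat with (T - 1 - s0)%nat by lia.
    rewrite Rsum_swap. apply Rsum_ext. intros x Hx. rewrite Ppow_S, <- Rsum_scal_l.
    apply Rsum_ext. intros. ring.
Qed.

Lemma Rpos_b_true x : 0 < x -> Rpos_b x = true.
Proof. intros H. unfold Rpos_b. destruct (Rlt_dec 0 x); auto; contradiction. Qed.
Lemma Rpos_b_false x : ~ 0 < x -> Rpos_b x = false.
Proof. intros H. unfold Rpos_b. destruct (Rlt_dec 0 x); auto; contradiction. Qed.

Lemma D_bound N P s v u z : stochastic N P -> is_SRT N P s -> (v < N)%nat -> (u < N)%nat ->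
  Rabs (Dv P s v u z) <= (if Rpos_b (P v u) then 1 else 0).
Proof.
  intros Hst H Hv Hu. unfold Dv.
  destruct (Rlt_dec 0 (P v u)) as [Hp|Hp].
  - rewrite Rpos_b_true by auto.
    pose proof (SRT_upper N P s v u z Hst H Hv Hu).
    pose proof (SRT_lower N P s v u z Hst H Hv Hu).
    unfold Rabs; destruct Rcase_abs; lra.
  - rewrite Rpos_b_false by auto.
    assert (P v u = 0). { destruct Hst as [Hnn _]. specialize (Hnn v u Hv Hu). lra. }
    rewrite (SRT_zero N P s v u 0 z H Hv) by lra. rewrite H0. simpl. rewrite Rmult_0_r, Rminus_0_r, Rabs_R0. lra.
Qed.

Lemma sym_pos N P pi x z : ergodic N P -> stationary N P pi -> reversible N P pi ->
  (x < N)%nat -> (z < N)%nat -> Rpos_b (P x z) = Rpos_b (P z x).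
Proof.
  intros He Hst Hrev Hx Hz.
  pose proof (pi_pos N P pi x He Hst Hx). pose proof (pi_pos N P pi z He Hst Hz).
  pose proof (Hrev x z Hx Hz).
  destruct He as [[Hnn _] _].
  pose proof (Hnn x z Hx Hz). pose proof (Hnn z x Hz Hx).
  destruct (Rlt_dec 0 (P x z)).
  - rewrite !Rpos_b_true; auto. apply Rnot_le_lt. intro. assert (P z x = 0) by lra. rewrite H5 in H1. nra.
  - rewrite !Rpos_b_false; auto. intro. assert (P x z = 0) by lra. rewrite H5 in H1. nra.
Qed.

Lemma count_delta N P z : Rsum N (fun x => if Rpos_b (P z x) then 1 else 0) = INR (delta N P z).
Proof. unfold Rsum, delta. apply (Rsum_ind_length (seq 0 N) (fun u => Rpos_b (P z u))). Qed.

Lemma fold_max_ge l x : In x l -> (x <= fold_right Nat.max 0 l)%nat.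
Proof. induction l; simpl. tauto. intros [E|H]. subst; lia. specialize (IHl H). lia. Qed.

Lemma delta_le_max N P u : (u < N)%nat -> (delta N P u <= max_degree N P)%nat.
Proof.
  intros Hu. unfold max_degree. apply fold_max_ge. apply in_map. apply in_seq. lia.
Qed.

Lemma fold_min_le l a x : In x l -> fold_right Rmin a l <= x.
Proof.
  induction l; simpl. tauto. intros [E|H]. subst. apply Rmin_l.
  eapply Rle_trans. apply Rmin_r. auto.
Qed.

Lemma fold_min_pos l a : 0 < a -> (forall x, In x l -> 0 < x) -> 0 < fold_right Rmin a l.
Proof.
  induction l; simpl; intros Ha H. auto.
  apply Rmin_glb_lt. apply H; auto. apply IHl; auto.
Qed.

Lemma pimin_le N pi w : (w < N)%nat -> pimin N pi <= pi w.
Proof. intros Hw. unfold pimin. apply fold_min_le. apply in_map. apply in_seq. lia. Qed.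

Lemma pimin_pos N P pi : ergodic N P -> stationary N P pi -> (0 < N)%nat -> 0 < pimin N pi.
Proof.
  intros He Hst HN. unfold pimin. apply fold_min_pos. apply (pi_pos N P pi); auto.
  intros x Hx. apply in_map_iff in Hx. destruct Hx as [y [E Hy]]. subst. apply in_seq in Hy.
  apply (pi_pos N P pi); auto. lia.
Qed.

Lemma rr_term N P s chi0 t sp w : stochastic N P -> (w < N)%nat ->
  Rsum N (fun x => rr N P s chi0 t x * Ppow N P sp x w) =
  Rsum N (fun z => Rsum N (fun x => DT N P s chi0 t x z) * (Ppow N P (S sp) z w - Ppow N P sp z w)).
Proof.
  intros Hs Hw. unfold rr.
  set (A := fun z => Rsum N (fun x => DT N P s chi0 t x z)).
  transitivity (Rsum N (fun x => Rsum N (fun y => A y * P y x * Ppow N P sp x w) - A x * Ppow N P sp x w)).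
  { apply Rsum_ext. intros. unfold A. rewrite Rsum_scal_r. ring. }
  rewrite Rsum_minus, Rsum_swap.
  transitivity (Rsum N (fun z => A z * Ppow N P (S sp) z w - A z * Ppow N P sp z w)).
  2:{ apply Rsum_ext. intros. unfold A. ring. }
  rewrite Rsum_minus. f_equal. apply Rsum_ext. intros z Hz.
  rewrite Ppow_S_left by auto. rewrite <- Rsum_scal_l. apply Rsum_ext. intros. ring.
Qed.

Lemma term_bound N P pi s chi0 t sp w : ergodic N P -> stationary N P pi -> reversible N P pi ->
  is_SRT N P s -> (w < N)%nat ->
  Rabs (Rsum N (fun x => rr N P s chi0 t x * Ppow N P sp x w)) <=
  INR (max_degree N P) * (pi w / pimin N pi) * bterm N P w sp.
Proof.
  intros He Hst Hrev HS Hw.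
  assert (Hs : stochastic N P) by (destruct He; auto).
  assert (Hpm : 0 < pimin N pi) by (apply (pimin_pos N P pi); auto; lia).
  assert (Hpw : 0 < pi w) by (apply (pi_pos N P pi); auto).
  rewrite rr_term by auto.
  eapply Rle_trans. apply Rsum_abs_le.
  unfold bterm. rewrite <- Rsum_scal_l. apply Rsum_le. intros z Hz.
  assert (Hpz : 0 < pi z) by (apply (pi_pos N P pi); auto).
  assert (Hpmz : pimin N pi <= pi z) by (apply pimin_le; auto).
  rewrite Rabs_mult.
  assert (H1 : Rabs (Rsum N (fun x => DT N P s chi0 t x z)) <= INR (max_degree N P)).
  { eapply Rle_trans. apply Rsum_abs_le.
    apply Rle_trans with (Rsum N (fun x => if Rpos_b (P z x) then 1 else 0)).
    apply Rsum_le. intros x Hx. rewrite <- (sym_pos N P pi x z) by auto. unfold DT. apply (D_bound N); auto.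
    rewrite count_delta. apply le_INR. apply delta_le_max; auto. }
  assert (H2 : Rabs (Ppow N P (S sp) z w - Ppow N P sp z w) =
               pi w / pi z * Rabs (Ppow N P (S sp) w z - Ppow N P sp w z)).
  { assert (E : forall t, Ppow N P t z w = pi w / pi z * Ppow N P t w z).
    { intros t0. pose proof (rev_pow N P pi t0 z w Hs Hrev Hz Hw). field_simplify_eq; lra. }
    rewrite !E. replace (pi w / pi z * Ppow N P (S sp) w z - pi w / pi z * Ppow N P sp w z)
      with (pi w / pi z * (Ppow N P (S sp) w z - Ppow N P sp w z)) by ring.
    rewrite Rabs_mult, Rabs_right. reflexivity. apply Rle_ge. unfold Rdiv. apply Rmult_le_pos; try lra.
    left; apply Rinv_0_lt_compat; lra. }
  rewrite H2.
  assert (H3 : pi w / pi z <= pi w / pimin N pi).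
  { unfold Rdiv. apply Rmult_le_compat_l. lra. apply Rinv_le_contravar; lra. }
  assert (0 <= Rabs (Ppow N P (S sp) w z - Ppow N P sp w z)) by apply Rabs_pos.
  assert (0 <= pi w / pi z) by (unfold Rdiv; apply Rmult_le_pos; [lra| left; apply Rinv_0_lt_compat; lra]).
  assert (0 <= Rabs (Rsum N (fun x => DT N P s chi0 t x z))) by apply Rabs_pos.
  assert (0 <= INR (max_degree N P)) by apply pos_INR.
  apply Rle_trans with (INR (max_degree N P) * (pi w / pi z * Rabs (Ppow N P (S sp) w z - Ppow N P sp w z))).
  apply Rmult_le_compat_r; auto. apply Rmult_le_pos; auto.
  rewrite (Rmult_assoc (INR (max_degree N P))). apply Rmult_le_compat_l; auto.
  apply Rmult_le_compat_r; auto.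
Qed.

Lemma main_bound N P pi s chi0 T w : ergodic N P -> stationary N P pi -> reversible N P pi ->
  is_SRT N P s -> (w < N)%nat ->
  Rabs (gg N P s chi0 T w) <= Rabs (Rsum N (fun v => DT N P s chi0 T v w)) +
     INR (max_degree N P) * (pi w / pimin N pi) * Rsum T (fun sp => bterm N P w sp).
Proof.
  intros He Hst Hrev HS Hw.
  replace (gg N P s chi0 T w) with (Rsum N (fun v => DT N P s chi0 T v w) + hh N P s chi0 T w)
    by (unfold hh; ring).
  eapply Rle_trans. apply Rabs_triang. apply Rplus_le_compat_l.
  rewrite (lin_rec N P (hh N P s chi0) (rr N P s chi0)).
  2:{ intros; apply hh_0; auto. }
  2:{ intros; apply hh_rec; auto. }
  2: auto.
  eapply Rle_trans. apply Rsum_abs_le. rewrite <- Rsum_scal_l. apply Rsum_le. intros.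
  apply term_bound; auto.
Qed.

Lemma Rsum_ge_two n a b f : (a < n)%nat -> (b < n)%nat -> a <> b ->
  (forall i, (i < n)%nat -> 0 <= f i) -> f a + f b <= Rsum n f.
Proof.
  intros Ha Hb Hab H. rewrite (Rsum_remove n a f Ha).
  assert (f b <= Rsum n (fun i => if Nat.eqb i a then 0 else f i)).
  { replace (f b) with ((fun i => if Nat.eqb i a then 0 else f i) b).
    apply (Rsum_ge_term n b (fun i => if Nat.eqb i a then 0 else f i)); auto. intros. destruct (Nat.eqb i a). lra. auto.
    simpl. replace (Nat.eqb b a) with false. reflexivity. symmetry; apply Nat.eqb_neq; auto. }
  lra.
Qed.

Lemma tstar0_N N P pi : stationary N P pi -> is_mixing_rate N P pi 0 -> (N <= 1)%nat.
Proof.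
  intros Hst [Hm _]. destruct (le_lt_dec N 1) as [h|h]; auto. exfalso.
  assert (Hd : forall v, (v < N)%nat -> Rsum N (fun u => Rabs (Ppow N P 0 v u - pi u)) <= /2).
  { intros v Hv. destruct (Hm v Hv) as [t [Ht Hd]]. assert (t = 0%nat) by lia. subst. unfold dTV_row in Hd. lra. }
  pose proof (Hd 0%nat ltac:(lia)) as H0. pose proof (Hd 1%nat ltac:(lia)) as H1.
  pose proof (Rsum_ge_two N 0 1 (fun u => Rabs (Ppow N P 0 0 u - pi u)) ltac:(lia) ltac:(lia) ltac:(lia) ltac:(intros; apply Rabs_pos)).
  pose proof (Rsum_ge_two N 0 1 (fun u => Rabs (Ppow N P 0 1 u - pi u)) ltac:(lia) ltac:(lia) ltac:(lia) ltac:(intros; apply Rabs_pos)).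
  cbv beta in H, H2.
  change (Ppow N P 0 0 0) with 1 in H. change (Ppow N P 0 0 1) with 0 in H.
  change (Ppow N P 0 1 0) with 0 in H2. change (Ppow N P 0 1 1) with 1 in H2.
  pose proof (Rle_abs (1 - pi 0%nat)). pose proof (Rle_abs (-(0 - pi 1%nat))).
  pose proof (Rle_abs (1 - pi 1%nat)). pose proof (Rle_abs (-(0 - pi 0%nat))). rewrite Rabs_Ropp in *. lra.
Qed.

Theorem theorem3p2 (N : nat) (P : nat -> nat -> R) (pi : nat -> R) (tstar : nat)
  (sigma : nat -> nat -> nat) (chi0 : nat -> nat) :
  ergodic N P ->
  stationary N P pi ->
  reversible N P pi ->
  is_mixing_rate N P pi tstar ->
  is_SRT N P sigma ->
  forall (w T : nat), (w < N)%nat ->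
    Rabs (INR (chi_conf N sigma chi0 T w) - mu_dist N P chi0 T w)
      <= 6 * pi w / pimin N pi * INR tstar * INR (max_degree N P).
Proof.
  intros He Hst Hrev Hm HS w T Hw.
  assert (Hs : stochastic N P) by (destruct He; auto).
  change (INR (chi_conf N sigma chi0 T w) - mu_dist N P chi0 T w) with (gg N P sigma chi0 T w).
  pose proof (main_bound N P pi sigma chi0 T w He Hst Hrev HS Hw) as HB.
  assert (Hpm : 0 < pimin N pi) by (apply (pimin_pos N P pi); auto; lia).
  assert (Hpw : 0 < pi w) by (apply (pi_pos N P pi); auto).
  assert (Hq : 1 <= pi w / pimin N pi).
  { apply (Rmult_le_reg_r (pimin N pi)); auto. unfold Rdiv. rewrite Rmult_assoc, Rinv_l by lra.
    pose proof (pimin_le N pi w Hw). lra. }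
  assert (HD0 : 0 <= INR (max_degree N P)) by apply pos_INR.
  destruct tstar as [|t1].
  - assert (N = 1%nat) by (pose proof (tstar0_N N P pi Hst Hm); lia). subst N.
    assert (w = 0%nat) by lia. subst w.
    assert (HP00 : P 0%nat 0%nat = 1). { destruct Hs as [_ Hr]. specialize (Hr 0%nat ltac:(lia)). rewrite Rsum_S, Rsum_0 in Hr. lra. }
    assert (HDT : Rsum 1 (fun v => DT 1 P sigma chi0 T v 0%nat) = 0).
    { rewrite Rsum_S, Rsum_0. unfold DT, Dv. rewrite HP00.
      pose proof (Icount_sum 1 sigma 0 (Sc 1 sigma chi0 T 0)) as H.
      assert (Hj : forall j, (sigma 0%nat j < 1)%nat) by (intros j; apply (SRT_facts 1 P sigma 0 j HS); lia).
      specialize (H Hj).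
      rewrite Rsum_S, Rsum_0 in H. lra. }
    assert (Hb : Rsum T (fun sp => bterm 1 P 0 sp) = 0).
    { rewrite (Rsum_ext _ _ (fun _ => 0)). apply Rsum_const0. intros sp _. unfold bterm.
      rewrite Rsum_S, Rsum_0.
      assert (forall t, Ppow 1 P t 0 0 = 1).
      { intros t. pose proof (Ppow_row 1 P t 0 Hs ltac:(lia)). rewrite Rsum_S, Rsum_0 in H. lra. }
      rewrite !H. replace (1 - 1) with 0 by ring. rewrite Rabs_R0. ring. }
    rewrite HDT, Hb, Rabs_R0 in HB. simpl INR. nra.
  - assert (Ht : (1 <= S t1)%nat) by lia.
    pose proof (bsum N P pi (S t1) w T Hs Hst Hm Hw Ht) as Hbs.
    assert (HDT : Rabs (Rsum N (fun v => DT N P sigma chi0 T v w)) <= INR (max_degree N P)).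
    { eapply Rle_trans. apply Rsum_abs_le.
      apply Rle_trans with (Rsum N (fun x => if Rpos_b (P w x) then 1 else 0)).
      apply Rsum_le. intros x Hx. rewrite <- (sym_pos N P pi x w) by auto. unfold DT. apply (D_bound N); auto.
      rewrite count_delta. apply le_INR. apply delta_le_max; auto. }
    set (q := pi w / pimin N pi) in *.
    set (tt := INR (S t1)) in *.
    assert (Htt : 1 <= tt) by (unfold tt; rewrite S_INR; pose proof (pos_INR t1); lra).
    replace (6 * pi w / pimin N pi * tt * INR (max_degree N P)) with (6 * q * tt * INR (max_degree N P))
      by (unfold q; unfold Rdiv; ring).
    set (D := INR (max_degree N P)) in *.
    assert (0 <= Rsum T (fun sp => bterm N P w sp)) by (apply Rsum_nonneg; intros; apply bterm_nonneg).
    assert (D * q * Rsum T (fun sp => bterm N P w sp) <= D * q * (4 * tt)).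
    { apply Rmult_le_compat_l. nra. auto. }
    assert (1 <= q * tt) by nra.
    assert (D <= D * (q * tt)) by nra.
    assert (0 <= D * (q * tt)) by nra.
    replace (6 * q * tt * D) with (6 * (D * (q * tt))) by ring.
    replace (D * q * (4 * tt)) with (4 * (D * (q * tt))) in H0 by ring.
    lra.
Qed.
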